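(* Let $G=\{\cdot\mid *\}$ and let $\mathcal{U}=\mathcal{D}(G)$. Then $G\equiv_\mathcal{U}0$.
   Context: Games are finite partizan games; $\{\cdot\mid *\}$ is the game with no Left option and sole Right option $*=\{0\mid0\}$. $o(G)$ is the misère outcome class (ordered $\mathscr{L}>\mathscr{N}>\mathscr{R}$, $\mathscr{L}>\mathscr{P}>\mathscr{R}$). A universe is a set of games closed under options, disjunctive sums, conjugates, and forming $\{\mathscr{G}^L\mid\mathscr{G}^R\}$ from nonempty finite subsets of it; $\mathcal{D}(\mathcal{A})$ is the smallest universe containing $\mathcal{A}$. $G\equiv_\mathcal{U}H$ means $o(G+X)=o(H+X)$ for all $X\in\mathcal{U}$. *)

(* Defs.v *)
From Stdlib Require Import List.
Import ListNotations.

Inductive game : Type := Game : list game -> list game -> game.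

Definition lefts (G : game) : list game := match G with Game L _ => L end.
Definition rights (G : game) : list game := match G with Game _ R => R end.

Definition zero : game := Game [] [].
Definition star : game := Game [zero] [zero].

(** Misere play: a player with no move available wins.
    [wins_first G] = (Left wins moving first in G, Right wins moving first in G). *)
Fixpoint wins_first (G : game) : bool * bool :=
  match G with
  | Game L R =>
      (match L with [] => true | _ => existsb (fun g => negb (snd (wins_first g))) L end,
       match R with [] => true | _ => existsb (fun g => negb (fst (wins_first g))) R end)
  end.

Inductive outcome : Type := OL | ON | OP | OR.

Definition o (G : game) : outcome :=
  match wins_first G with
  | (true, false) => OL
  | (true, true) => ON
  | (false, false) => OP
  | (false, true) => OR
  end.

Fixpoint add (G : game) : game -> game :=
  fix addG (H : game) : game :=
    match G, H with
    | Game GL GR, Game HL HR =>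
        Game (map (fun g => add g H) GL ++ map addG HL)
             (map (fun g => add g H) GR ++ map addG HR)
    end.

Fixpoint conj (G : game) : game :=
  match G with Game L R => Game (map conj R) (map conj L) end.

Definition is_universe (U : game -> Prop) : Prop :=
  (forall G g, U G -> In g (lefts G) -> U g) /\
  (forall G g, U G -> In g (rights G) -> U g) /\
  (forall G H, U G -> U H -> U (add G H)) /\
  (forall G, U G -> U (conj G)) /\
  (forall L R, L <> [] -> R <> [] ->
     (forall g, In g L -> U g) -> (forall g, In g R -> U g) -> U (Game L R)).

Definition Dclos (A : game -> Prop) (G : game) : Prop :=
  forall U, is_universe U -> (forall x, A x -> U x) -> U G.

Definition equiv_mod (U : game -> Prop) (G H : game) : Prop :=
  forall X, U X -> o (add G X) = o (add H X).

(* Main.v *)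
Require Import Defs.
From Stdlib Require Import List Bool.
Import ListNotations.

Fixpoint game_ind2 (P : game -> Prop)
  (H : forall L R, (forall g, In g L -> P g) -> (forall g, In g R -> P g) -> P (Game L R))
  (g : game) : P g :=
  match g with
  | Game L R =>
    H L R
      ((fix f (l : list game) : forall x, In x l -> P x :=
         match l return forall x, In x l -> P x with
         | [] => fun x Hx => False_ind _ Hx
         | y :: t => fun x Hx =>
             match Hx with
             | or_introl e => eq_ind y P (game_ind2 P H y) x e
             | or_intror H' => f t x H'
             end
         end) L)
      ((fix f (l : list game) : forall x, In x l -> P x :=
         match l return forall x, In x l -> P x with
         | [] => fun x Hx => False_ind _ Hx
         | y :: t => fun x Hx =>
             match Hx with
             | or_introl e => eq_ind y P (game_ind2 P H y) x e
             | or_intror H' => f t x H'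
             end
         end) R)
  end.

Lemma add_eq GL GR HL HR :
  add (Game GL GR) (Game HL HR) =
  Game (map (fun g => add g (Game HL HR)) GL ++ map (fun h => add (Game GL GR) h) HL)
       (map (fun g => add g (Game HL HR)) GR ++ map (fun h => add (Game GL GR) h) HR).
Proof. reflexivity. Qed.

Lemma add_zero_l X : add zero X = X.
Proof.
  induction X as [L R IHL IHR] using game_ind2.
  unfold zero. rewrite add_eq. simpl. f_equal.
  - rewrite <- (map_id L) at 2. apply map_ext_in. exact IHL.
  - rewrite <- (map_id R) at 2. apply map_ext_in. exact IHR.
Qed.

Lemma conj_conj X : conj (conj X) = X.
Proof.
  induction X as [L R IHL IHR] using game_ind2.
  simpl. rewrite !map_map. f_equal.
  - rewrite <- (map_id L) at 2. apply map_ext_in. exact IHL.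
  - rewrite <- (map_id R) at 2. apply map_ext_in. exact IHR.
Qed.

Lemma conj_add X : forall Y, conj (add X Y) = add (conj X) (conj Y).
Proof.
  induction X as [XL XR IHXL IHXR] using game_ind2.
  intro Y. induction Y as [YL YR IHYL IHYR] using game_ind2.
  simpl conj at 2 3. rewrite add_eq. rewrite add_eq. simpl conj.
  rewrite !map_app, !map_map. f_equal; f_equal; apply map_ext_in; intros; auto.
Qed.

Inductive goodR : game -> Prop :=
| gR : forall L, (forall l, In l L -> goodRL l) -> goodR (Game L [])
with goodRL : game -> Prop :=
| gRL : forall lL lR r, In r lR -> goodR r -> goodRL (Game lL lR).

Scheme goodR_mut := Induction for goodR Sort Prop
with goodRL_mut := Induction for goodRL Sort Prop.

Lemma goodR_add : forall X, goodR X -> forall Y, goodR Y -> goodR (add X Y).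
Proof.
  apply (goodR_mut (fun X _ => forall Y, goodR Y -> goodR (add X Y))
                   (fun l _ => forall Y, goodR Y -> goodRL (add l Y))).
  - intros L HL IHL Y HY.
    apply (goodR_mut (fun Y _ => goodR (add (Game L []) Y))
                     (fun m _ => goodRL (add (Game L []) m))); auto.
    + intros M HM IHM. rewrite add_eq. simpl.
      apply gR. intros z Hz. apply in_app_or in Hz. destruct Hz as [Hz|Hz];
        apply in_map_iff in Hz; destruct Hz as [w [<- Hw]].
      * apply IHL; auto. apply gR. exact HM.
      * auto.
    + intros mL mR r Hr Hgr IHr. rewrite add_eq. simpl.
      eapply gRL; [| exact IHr]. apply in_map_iff. eauto.
  - intros lL lR r Hr Hgr IHr Y HY. destruct Y as [YL YR]. rewrite add_eq.
    eapply gRL; [| apply IHr; exact HY]. apply in_or_app. left.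
    apply in_map_iff. eauto.
Qed.

Inductive S : game -> Prop :=
| mkS : forall L R, (R = [] -> goodR (Game L R)) -> (L = [] -> goodR (conj (Game L R))) ->
    (forall g, In g L -> S g) -> (forall g, In g R -> S g) -> S (Game L R).

Lemma app_nil_inv {A} (l1 l2 : list A) : l1 ++ l2 = [] -> l1 = [] /\ l2 = [].
Proof. destruct l1; destruct l2; simpl; intuition discriminate. Qed.

Lemma map_nil_inv {A B} (f : A -> B) l : map f l = [] -> l = [].
Proof. destruct l; simpl; congruence. Qed.

Lemma S_add X : S X -> forall Y, S Y -> S (add X Y).
Proof.
  intro HX. induction HX as [XL XR HXR HXL HSL IHL HSR IHR].
  intros Y HY. induction HY as [YL YR HYR HYL HSL' IHL' HSR' IHR'].
  rewrite add_eq. constructor.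
  - intro E. rewrite <- add_eq. apply app_nil_inv in E. destruct E as [E1 E2].
    apply map_nil_inv in E1. apply map_nil_inv in E2.
    apply goodR_add; auto.
  - intro E. rewrite <- add_eq. apply app_nil_inv in E. destruct E as [E1 E2].
    apply map_nil_inv in E1. apply map_nil_inv in E2.
    rewrite conj_add. apply goodR_add; auto.
  - intros z Hz. apply in_app_or in Hz. destruct Hz as [Hz|Hz];
      apply in_map_iff in Hz; destruct Hz as [w [<- Hw]].
    + apply IHL; auto. constructor; auto.
    + auto.
  - intros z Hz. apply in_app_or in Hz. destruct Hz as [Hz|Hz];
      apply in_map_iff in Hz; destruct Hz as [w [<- Hw]].
    + apply IHR; auto. constructor; auto.
    + auto.
Qed.

Lemma S_conj X : S X -> S (conj X).
Proof.
  intro HX. induction HX as [L R HR HL HSL IHL HSR IHR].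
  simpl. constructor.
  - intro E. apply map_nil_inv in E. apply HL in E. exact E.
  - intro E. apply map_nil_inv in E. change (goodR (conj (conj (Game L R)))).
    rewrite conj_conj. auto.
  - intros z Hz. apply in_map_iff in Hz. destruct Hz as [w [<- Hw]]. auto.
  - intros z Hz. apply in_map_iff in Hz. destruct Hz as [w [<- Hw]]. auto.
Qed.

Lemma S_universe : is_universe S.
Proof.
  split; [|split; [|split; [|split]]].
  - intros G g HG Hg. destruct HG. simpl in Hg. auto.
  - intros G g HG Hg. destruct HG. simpl in Hg. auto.
  - intros G H HG HH. apply S_add; auto.
  - apply S_conj.
  - intros L R HL HR H1 H2. constructor; auto; intro; contradiction.
Qed.

Lemma goodR_zero : goodR zero.
Proof. apply gR. intros l []. Qed.

Lemma S_zero : S zero.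
Proof. constructor; try (intros; apply goodR_zero); intros g []. Qed.

Lemma S_G : S (Game [] [star]).
Proof.
  constructor.
  - discriminate.
  - intros _. simpl. apply gR. intros l [<-|[]].
    eapply gRL; [left; reflexivity | apply goodR_zero].
  - intros g [].
  - intros g [<-|[]]. constructor; try discriminate.
    + intros g [<-|[]]. apply S_zero.
    + intros g [<-|[]]. apply S_zero.
Qed.

Definition WL X := fst (wins_first X).
Definition WR X := snd (wins_first X).

Definition side (f : game -> bool) (l : list game) : bool :=
  match l with [] => true | _ => existsb (fun g => negb (f g)) l end.

Lemma wf_eq L R : wins_first (Game L R) = (side WR L, side WL R).
Proof. reflexivity. Qed.

Lemma WL_eq L R : WL (Game L R) = side WR L.
Proof. reflexivity. Qed.
Lemma WR_eq L R : WR (Game L R) = side WL R.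
Proof. reflexivity. Qed.

Lemma lemA : forall X, goodR X -> WL (add star X) = false.
Proof.
  apply (goodR_mut (fun X _ => WL (add star X) = false)
                   (fun l _ => WR (add star l) = true)).
  - intros L HL IHL. unfold star. rewrite add_eq. cbn [map app].
    fold zero. rewrite add_zero_l. rewrite WL_eq. unfold side.
    cbn [existsb]. rewrite WR_eq. cbn [side negb orb].
    destruct (existsb _ _) eqn:E; auto.
    apply existsb_exists in E. destruct E as [g [Hg Hn]].
    apply in_map_iff in Hg. destruct Hg as [l [<- Hl]].
    specialize (IHL l Hl). unfold star in IHL. rewrite IHL in Hn. discriminate.
  - intros lL lR r Hr Hgr IHr. unfold star. rewrite add_eq. cbn [map app].
    rewrite WR_eq. unfold side. cbn [existsb].
    apply orb_true_iff. right. apply existsb_exists.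
    exists (add (Game [zero] [zero]) r). split.
    + apply in_map_iff. eauto.
    + unfold star in IHr. rewrite IHr. reflexivity.
Qed.

Lemma existsb_map_ext (f g : game -> bool) (h : game -> game) (l : list game) : (forall x, In x l -> f (h x) = g x) ->
  existsb (fun y => negb (f y)) (map h l) = existsb (fun y => negb (g y)) l.
Proof.
  induction l as [|a t IH]; intro H; simpl; auto.
  rewrite H by (left; auto). rewrite IH; auto. intros; apply H; right; auto.
Qed.

Lemma side_map_ext (f g : game -> bool) (h : game -> game) (l : list game) : (forall x, In x l -> f (h x) = g x) ->
  side f (map h l) = side g l.
Proof.
  intro H. destruct l as [|a t]; [reflexivity|].
  unfold side. cbn [map]. rewrite <- (existsb_map_ext f g h (a :: t)) by auto. reflexivity.
Qed.

Definition G0 := Game [] [star].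

Lemma main X : S X -> wins_first (add G0 X) = wins_first X.
Proof.
  intro HX. induction HX as [XL XR HXR HXL HSL IHL HSR IHR].
  unfold G0. rewrite add_eq. cbn [map app]. fold G0.
  rewrite !wf_eq. f_equal.
  - apply side_map_ext. intros x Hx. unfold WR. rewrite IHL; auto.
  - assert (HB : WL (add star (Game XL XR)) = false -> WR (Game XL XR) = true).
    { unfold star. rewrite add_eq. cbn [map app]. fold zero. rewrite add_zero_l.
      rewrite WL_eq. unfold side. cbn [existsb].
      destruct (WR (Game XL XR)); auto. }
    unfold side at 1. cbn [existsb].
    rewrite (existsb_map_ext WL WL). 2:{ intros x Hx. unfold WL. rewrite IHR; auto. }
    destruct XR as [|a t].
    + rewrite lemA by (apply HXR; reflexivity). reflexivity.
    + destruct (WL (add star (Game XL (a :: t)))) eqn:E; [reflexivity|].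
      specialize (HB eq_refl). rewrite WR_eq in HB. unfold side in HB |- *. rewrite HB. reflexivity.
Qed.

Theorem mainTheorem17 :
  let G := Game [] [star] in
  equiv_mod (Dclos (fun x => x = G)) G zero.
Proof.
  intro G. intros X HX.
  assert (HS : S X).
  { apply HX. apply S_universe. intros x ->. apply S_G. }
  rewrite add_zero_l. unfold o. change G with G0. rewrite main by exact HS.
  reflexivity.
Qed.
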